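(* For every integer $n\ge 0$, \[ \sum_{k=0}^{n}(-4)^k\frac{\binom{n}{k}}{\binom{2k}{k}}\,k^2H_{2k} =\frac{n(2n+1)\{2H_{2n}-H_n\}}{(2n-1)(2n-3)(2n-5)}-\frac{n(96n^4-280n^3+60n^2+182n-13)}{(2n-1)^2(2n-3)^2(2n-5)^2}. \]
   Context: For an integer $m\ge 0$, $H_m$ denotes the $m$-th harmonic number: $H_0=0$ and $H_m=\sum_{j=1}^m \frac1j$ for $m\ge1$. $\binom{n}{k}$ is the usual binomial coefficient. *)

(* Defs.v *)
From HB Require Import structures.
From mathcomp Require Import all_boot all_order all_algebra.
Set Implicit Arguments. Unset Strict Implicit. Unset Printing Implicit Defensive.
Import Order.TTheory GRing.Theory Num.Theory.
Local Open Scope ring_scope.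

Definition harmonic (m : nat) : rat := \sum_(1 <= j < m.+1) (j%:R)^-1.

(* Main.v *)
Require Import Defs.
From HB Require Import structures.
From mathcomp Require Import all_boot all_order all_algebra.
From mathcomp Require Import ring zify.
Import Order.TTheory GRing.Theory Num.Theory.
Local Open Scope ring_scope.

Definition cc (n k : nat) : rat := (-4 : rat) ^+ k * ('C(n, k)%:R / 'C(2 * k, k)%:R).

Lemma natS (k : nat) : (k.+1)%:R = k%:R + 1 :> rat.
Proof. by rewrite -addn1 natrD. Qed.

Lemma cenbin (k : nat) : (k.+1)%:R * ('C(2 * k.+1, k.+1))%:R
   = 2 * (2 * k%:R + 1) * ('C(2 * k, k))%:R :> rat.
Proof.
have e1 : (2 * k.+1 = (2*k).+2)%N by lia.
rewrite e1.
have : (k.+1 * k.+1 * 'C((2 * k).+2, k.+1))%N = ((2*k).+2 * (2*k).+1 * 'C(2 * k, k))%N.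
  have d1 := mul_bin_diag (2*k).+2 k. rewrite /= in d1.
  have d2 := mul_bin_down (2*k).+1 k. rewrite /= in d2.
  rewrite -mulnA -d1 -mulnA d2.
  have -> : ((2 * k).+1 - k = k.+1)%N by lia.
  lia.
move/(congr1 (fun m => m%:R : rat)); rewrite !natrM.
rewrite !natS natrM.
move=> h.
apply: (mulfI (x := k%:R + 1)).
  by rewrite -natS pnatr_eq0.
rewrite mulrA h. ring.
Qed.

Lemma kS0 (k : nat) : (k%:R + 1 : rat) != 0.
Proof. by rewrite -natS pnatr_eq0. Qed.
Lemma k2S0 (k : nat) : (2 * k%:R + 1 : rat) != 0.
Proof. have -> : (2 * k%:R + 1 : rat) = ((2*k)%N.+1)%:R by rewrite -natrM -natS. by rewrite pnatr_eq0. Qed.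
Lemma cb0 (k : nat) : ('C(2 * k, k)%:R : rat) != 0.
Proof. by rewrite pnatr_eq0 -lt0n bin_gt0; lia. Qed.

Ltac nz1 := first [ by rewrite addrC -natS pnatr_eq0 | by rewrite -natS pnatr_eq0 | by rewrite -natrM -natS pnatr_eq0 | by rewrite pnatr_eq0 -lt0n bin_gt0; lia ].
Ltac nz := repeat (match goal with |- is_true (_ && _) => apply/andP; split end); nz1.

Lemma cS (n k : nat) : (k <= n)%N ->
  cc n k.+1 * (2 * k%:R + 1) = cc n k * (2 * (k%:R - n%:R)).
Proof.
move=> kn.
have hA : ('C(n, k.+1))%:R = (n%:R - k%:R) * 'C(n, k)%:R / (k%:R + 1) :> rat.
  have := mul_bin_left n k. move/(congr1 (fun m => m%:R : rat)).
  rewrite !natrM natrB // natS => h.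
  apply: (mulfI (kS0 k)). rewrite h. field. nz.
have hB : ('C(2 * k.+1, k.+1))%:R = 2 * (2 * k%:R + 1) * 'C(2 * k, k)%:R / (k%:R + 1) :> rat.
  apply: (mulfI (kS0 k)). rewrite -natS cenbin natS. field. nz.
rewrite /cc hA hB exprS. field.
nz.
Qed.

Lemma cS' (n k : nat) : (k <= n)%N ->
  cc n k.+1 = cc n k * (2 * (k%:R - n%:R)) / (2 * k%:R + 1).
Proof. move=> kn; rewrite -(@cS n k kn); field; nz. Qed.

Lemma cc_big (n : nat) : cc n n.+1 = 0.
Proof. by rewrite /cc bin_small // mul0r mulr0. Qed.
Lemma cc0 (n : nat) : cc n 0 = 1.
Proof. by rewrite /cc bin0 muln0 bin0 expr0 mul1r divr1. Qed.

Lemma gosper (n : nat) (u : nat -> rat) :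
  \sum_(0 <= k < n.+1) cc n k * (2 * (k%:R - n%:R) / (2 * k%:R + 1) * u k.+1 - u k) = - u 0%N.
Proof.
rewrite (telescope_sumr_eq (fun k => cc n k * u k)) //.
  by rewrite cc_big cc0 mul0r mul1r sub0r.
move=> k /andP [_ kn]. rewrite cS' //. ring.
Qed.

Lemma odd_nz (n m : nat) : odd m -> (2 * n%:R - m%:R : rat) != 0.
Proof.
move=> om; rewrite subr_eq0 -natrM eqr_nat; apply/negP => /eqP h.
by move: om; rewrite -h oddM.
Qed.

Lemma T1 (n : nat) : \sum_(0 <= k < n.+1) cc n k = - (2 * n%:R - 1)^-1.
Proof.
have nz0 : (2 * n%:R - 1 : rat) != 0 by exact: (odd_nz n 1).
have := gosper n (fun k => (2 * k%:R - 1) / (1 - 2 * n%:R)).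
rewrite /= mulr0 sub0r => h.
have nz1 : (1 - 2 * n%:R : rat) != 0 by rewrite -opprB oppr_eq0.
rewrite [RHS](_ : _ = - (-1 / (1 - 2 * n%:R))); last by field; rewrite ?nz0 ?nz1.
rewrite -h; apply: eq_bigr => k _. rewrite natS.
have k1 := k2S0 k.
rewrite -[LHS]mulr1; congr (_ * _).
field. by rewrite k1 nz1.
Qed.

Definition Od (n : nat) : rat := \sum_(0 <= j < n) (2 * j%:R + 1)^-1.

Definition W (n : nat) : rat :=
  \sum_(0 <= k < n.+1) (-4 : rat) ^+ k * ('C(n.+1, k.+1)%:R / 'C(2 * k, k)%:R).

Lemma W_eq (n : nat) : W n = 1 - Od n.
Proof.
elim: n => [|n IH].
  by rewrite /W /Od big_nat1 big_geq // expr0 bin1 muln0 bin0 divr1 mul1r subr0.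
have e : W n.+1 = W n + \sum_(0 <= k < n.+2) cc n.+1 k.
  rewrite /W (eq_bigr (fun k => (-4 : rat)^+k * ('C(n.+1,k.+1)%:R / 'C(2 * k,k)%:R) + cc n.+1 k)); last first.
    by move=> k _; rewrite /cc binS natrD mulrDl mulrDr.
  rewrite big_split /=; congr (_ + _).
  by rewrite big_nat_recr //= bin_small // mul0r mulr0 addr0.
rewrite e IH T1 /Od big_nat_recr //= [n.+1%:R]natS.
have nz : (2 * (n%:R + 1) - 1 : rat) != 0.
  have -> : (2 * (n%:R + 1) - 1 : rat) = 2 * n%:R + 1 by ring.
  exact: k2S0.
have -> : (2 * (n%:R + 1) - 1 : rat) = 2 * n%:R + 1 by ring.
ring.
Qed.

Lemma Bsum (n : nat) : \sum_(0 <= k < n.+1) cc n k / (k%:R + 1) = (1 - Od n) / (n%:R + 1).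
Proof.
rewrite -W_eq /W mulr_suml; apply: eq_bigr => k _.
have h := mul_bin_diag n.+1 k. rewrite /= in h.
have h' : ('C(n.+1, k.+1)%:R : rat) = (n%:R + 1) * 'C(n, k)%:R / (k%:R + 1).
  apply: (mulfI (kS0 k)). rewrite -natS -natrM -h natrM natS. field. nz.
rewrite /cc h'. field. nz.
Qed.

Lemma harmS (k : nat) : harmonic (2 * k.+1) =
  harmonic (2 * k) + (2 * k%:R + 1)^-1 + (2 * k%:R + 2)^-1.
Proof.
rewrite /harmonic.
have -> : (2 * k.+1 = (2 * k).+2)%N by lia.
rewrite big_nat_recr //= big_nat_recr //=.
have -> : ((2 * k).+2%:R : rat) = 2 * k%:R + 2 by rewrite -addn2 natrD natrM.
have -> : ((2 * k).+1%:R : rat) = 2 * k%:R + 1 by rewrite -addn1 natrD natrM.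
done.
Qed.

Lemma harmO (n : nat) : 2 * harmonic (2 * n) - harmonic n = 2 * Od n.
Proof.
elim: n => [|n IH].
  by rewrite /harmonic /Od muln0 !big_geq // mulr0 subr0.
rewrite harmS {2}/harmonic big_nat_recr //= -/(harmonic n) /Od big_nat_recr //= -/(Od n).
rewrite [RHS]mulrDr -IH [n.+1%:R]natS.
have nz1 := k2S0 n.
have nz2 : (2 * n%:R + 2 : rat) != 0.
  have -> : (2 * n%:R + 2 : rat) = 2 * (n%:R + 1) by ring.
  by rewrite mulf_eq0 negb_or kS0.
field. by rewrite nz1 nz2 kS0.
Qed.

Definition Dn (N : rat) := (2 * N - 1) * (2 * N - 3) * (2 * N - 5).
Definition Rf (N K : rat) : rat :=
  (2 * N + 4 * N ^+ 2 + (-2 + 4 * N - 16 * N ^+ 2) * K + (7 - 24 * N + 20 * N ^+ 2) * K ^+ 2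
   + (-6 + 16 * N - 8 * N ^+ 2) * K ^+ 3) / Dn N.
Definition pf (N K : rat) : rat :=
  (17 * N + 150 * N ^+ 2 - 52 * N ^+ 3 - 152 * N ^+ 4 + 64 * N ^+ 5
   + (13 - 189 * N + 48 * N ^+ 2 - 104 * N ^+ 3 + 368 * N ^+ 4 - 144 * N ^+ 5) * K
   + (7 - 72 * N + 192 * N ^+ 2 - 112 * N ^+ 3 - 112 * N ^+ 4 + 64 * N ^+ 5) * K ^+ 2
   + (-36 + 192 * N - 352 * N ^+ 2 + 256 * N ^+ 3 - 64 * N ^+ 4) * K ^+ 3) / (Dn N ^+ 2).
Definition bet (N : rat) : rat := (2 * N + 6 * N ^+ 2 + 4 * N ^+ 3) / Dn N.

Lemma Dn_nz (n : nat) : Dn n%:R != 0.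
Proof.
rewrite /Dn !mulf_eq0 !negb_or.
rewrite (odd_nz n 1) //.
have -> : (3 : rat) = 3%:R by [].
have -> : (5 : rat) = 5%:R by [].
by rewrite (odd_nz n 3) // (odd_nz n 5).
Qed.

Lemma pointwise (N K h : rat) : Dn N != 0 -> 2 * K + 1 != 0 -> K + 1 != 0 ->
  2 * (K - N) / (2 * K + 1) *
    (Rf N (K + 1) * (h + (2 * K + 1)^-1 + (2 * K + 2)^-1) + pf N (K + 1))
  - (Rf N K * h + pf N K) = K ^+ 2 * h + bet N / (K + 1).
Proof.
move=> d k1 k2.
have k3 : (2 * K + 2 : rat) != 0.
  have -> : (2 * K + 2 : rat) = 2 * (K + 1) by ring.
  by rewrite mulf_eq0 negb_or k2.
move: d; rewrite /Rf /pf /bet /Dn !mulf_eq0 !negb_or => /andP [/andP [d1 d3] d5].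
field. by rewrite d1 d3 d5 k1 k2 k3.
Qed.

Theorem theorem3 (n : nat) :
  \sum_(0 <= k < n.+1)
     (-4 : rat) ^+ k * ('C(n, k)%:R / 'C(2 * k, k)%:R) * (k%:R ^+ 2) * harmonic (2 * k)
  = let N : rat := n%:R in
    N * (2 * N + 1) * (2 * harmonic (2 * n) - harmonic n)
      / ((2 * N - 1) * (2 * N - 3) * (2 * N - 5))
    - N * (96 * N ^+ 4 - 280 * N ^+ 3 + 60 * N ^+ 2 + 182 * N - 13)
      / ((2 * N - 1) ^+ 2 * (2 * N - 3) ^+ 2 * (2 * N - 5) ^+ 2).
Proof.
have G := gosper n (fun k => Rf n%:R k%:R * harmonic (2 * k) + pf n%:R k%:R).
have G' : \sum_(0 <= k < n.+1) cc n k * (k%:R ^+ 2 * harmonic (2 * k) + bet n%:R / (k%:R + 1))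
          = - pf n%:R 0.
  transitivity (- (Rf n%:R 0%:R * harmonic (2 * 0) + pf n%:R 0%:R)); last first.
    by rewrite /harmonic muln0 big_geq // mulr0 add0r.
  rewrite -G; apply: eq_bigr => k _; congr (_ * _).
  by rewrite /= harmS [k.+1%:R]natS pointwise ?Dn_nz ?k2S0 ?kS0.
rewrite (eq_bigr (fun k => cc n k * (k%:R ^+ 2 * harmonic (2 * k)) + cc n k * (bet n%:R / (k%:R + 1)))) in G'; last first.
  by move=> k _; rewrite mulrDr.
rewrite big_split /= in G'.
rewrite [X in _ + X = _](eq_bigr (fun k => bet n%:R * (cc n k / (k%:R + 1)))) in G'; last first.
  by move=> k _; rewrite mulrCA.
rewrite -mulr_sumr Bsum in G'.
rewrite (eq_bigr (fun k => cc n k * (k%:R ^+ 2 * harmonic (2 * k)))); last first.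
  by move=> k _; rewrite /cc !mulrA.
rewrite (_ : \sum_(0 <= k < n.+1) cc n k * (k%:R ^+ 2 * harmonic (2 * k))
   = - pf n%:R 0 - bet n%:R * ((1 - Od n) / (n%:R + 1))); last by rewrite -G' addrK.
rewrite /= harmO.
have d := Dn_nz n. have k2 := kS0 n.
move: d; rewrite /bet /pf /Dn !mulf_eq0 !negb_or => /andP [/andP [d1 d3] d5].
field. by rewrite d1 d3 d5 k2.
Qed.
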